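(* Let $(V,E,c,p)$ be a PCSTP instance with $s:=|T_p|\ge 2$, let $H$ be a terminal-regions decomposition, and enumerate $T_p=\{t_1,\dots,t_s\}$ so that $r^{pc}_H(t_1)\le r^{pc}_H(t_2)\le\dots\le r^{pc}_H(t_s)$. Let $v_i\in V\setminus T_p$. If there is an optimal solution $S$ with $v_i\in V(S)$, then $$C(S)\ \ge\ \underline{d}(v_i,\bar v_{i,1})+\underline{d}(v_i,\bar v_{i,2})+\sum_{k=1}^{s-2} r^{pc}_H(t_k).$$
   Context: A PCSTP instance $(V,E,c,p)$: finite undirected connected graph $G=(V,E)$, $c:E\to\mathbb{Q}_{>0}$, $p:V\to\mathbb{Q}_{\ge0}$. For a tree $S\subseteq G$ (connected acyclic subgraph with at least one vertex), $C(S):=\sum_{e\in E(S)}c(e)+\sum_{v\in V\setminus V(S)}p(v)$; an optimal solution is a tree minimizing $C$. $T_p:=\{v\in V:p(v)>0\}$. $d(u,w)$ is the shortest-path distance between $u,w$ in $G$ w.r.t. $c$. $\underline{d}(u,w)$ is the shortest-path distance between $u$ and $w$ in the subgraph of $G$ induced by $V\setminus(T_p\setminus\{u,w\})$ ($+\infty$ if none). For $v_i\in V\setminus T_p$, $\bar v_{i,1},\bar v_{i,2},\dots$ denote the potential terminals ordered by nondecreasing $\underline{d}(v_i,\cdot)$ (ties broken arbitrarily). A terminal-regions decomposition is a partition $H=\{H_t: t\in T_p\}$ of $V$ with $H_t\cap T_p=\{t\}$ and the subgraph induced by each $H_t$ connected. For $t\in T_p$, $r^{pc}_H(t):=\min\{p(t),\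 \min\{d(t,v): v\notin H_t\}\}$. *)

(* Defs.v *)
From HB Require Import structures.
From mathcomp Require Import all_boot all_order all_algebra.
Set Implicit Arguments. Unset Strict Implicit. Unset Printing Implicit Defensive.
Import Order.TTheory GRing.Theory Num.Theory.
Local Open Scope ring_scope.

(* A graph on a finite vertex type V is given by an edge set
   E : {set {set V}} whose elements are 2-element vertex sets. *)

Definition adjrel (V : finType) (ES : {set {set V}}) : rel V :=
  fun x y => [set x; y] \in ES.

(* Extended rationals Q ∪ {+oo}: None stands for +oo. *)
Definition ext := option rat.
Definition ext_le (a b : ext) : bool :=
  match a, b with
  | _, None => true
  | None, Some _ => false
  | Some x, Some y => x <= y
  end.
Definition ext_add (a b : ext) : ext :=
  match a, b with
  | Some x, Some y => Some (x + y)
  | _, _ => None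
  end.
Definition ext_min (a b : ext) : ext := if ext_le a b then a else b.
Definition ext_minseq (s : seq ext) : ext := foldr ext_min None s.

Definition walk_cost (V : finType) (c : {set V} -> rat) (u : V) (s : seq V) : rat :=
  \sum_(x <- pairmap (fun a b => c [set a; b]) u s) x.

(* Since costs are positive,
   the minimum over walks is attained by a simple path u :: s (uniq),
   which has at most #|V| vertices. *)
Definition dist_in (V : finType) (E : {set {set V}}) (c : {set V} -> rat)
    (A : {set V}) (u w : V) : ext :=
  ext_minseq (flatten
    [seq [seq Some (walk_cost c u (tval t))
         | t <- enum {: k.-tuple V}
         & [&& uniq (u :: tval t), path (adjrel E) u (tval t),
               last u (tval t) == w & all (fun x => x \in A) (u :: tval t)]]
    | k <- iota 0 #|V|.+1]).

Definition dist (V : finType) (E : {set {set V}}) (c : {set V} -> rat) (u w : V) : ext :=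
  dist_in E c setT u w.

Definition Tp (V : finType) (p : V -> rat) : {set V} := [set v | 0 < p v].

Definition dbar (V : finType) (E : {set {set V}}) (c : {set V} -> rat) (p : V -> rat)
    (u w : V) : ext :=
  dist_in E c (~: (Tp p :\ u :\ w)) u w.

Definition pcstp_instance (V : finType) (E : {set {set V}}) (c : {set V} -> rat)
    (p : V -> rat) : Prop :=
  [/\ forall e, e \in E -> #|e| = 2,
      forall x y : V, connect (adjrel E) x y,
      forall e, e \in E -> 0 < c e
    & forall v, 0 <= p v].

Definition acyclic (V : finType) (ES : {set {set V}}) : Prop :=
  forall s : seq V, uniq s -> (3 <= size s)%N -> ~~ cycle (adjrel ES) s.

Definition is_tree (V : finType) (E : {set {set V}}) (VS : {set V}) (ES : {set {set V}}) : Prop :=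
  [/\ VS != set0, ES \subset E, forall e, e \in ES -> e \subset VS,
      forall x y, x \in VS -> y \in VS -> connect (adjrel ES) x y
    & acyclic ES].

Definition pc_cost (V : finType) (c : {set V} -> rat) (p : V -> rat)
    (VS : {set V}) (ES : {set {set V}}) : rat :=
  \sum_(e in ES) c e + \sum_(v in ~: VS) p v.

Definition optimal (V : finType) (E : {set {set V}}) (c : {set V} -> rat) (p : V -> rat)
    (VS : {set V}) (ES : {set {set V}}) : Prop :=
  is_tree E VS ES /\
  forall VS' ES', is_tree E VS' ES' -> pc_cost c p VS ES <= pc_cost c p VS' ES'.

(* Terminal-regions decomposition {H t : t in T_p} (H t is only meaningful for t in T_p). *)
Definition terminal_regions (V : finType) (E : {set {set V}}) (p : V -> rat)
    (H : V -> {set V}) : Prop :=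
  [/\ forall v, exists2 t, t \in Tp p & v \in H t,
      forall t t', t \in Tp p -> t' \in Tp p -> t != t' -> [disjoint H t & H t'],
      forall t, t \in Tp p -> H t :&: Tp p = [set t]
    & forall t, t \in Tp p -> forall x y, x \in H t -> y \in H t ->
        connect (adjrel [set e in E | e \subset H t]) x y].

Definition rpc (V : finType) (E : {set {set V}}) (c : {set V} -> rat) (p : V -> rat)
    (H : V -> {set V}) (t : V) : rat :=
  match ext_minseq [seq dist E c t v | v <- enum (~: H t)] with
  | Some x => Num.min (p t) x
  | None => p t
  end.

(* Main.v *)
Require Import Defs.
From HB Require Import structures.
From mathcomp Require Import all_boot all_order all_algebra.
From mathcomp Require Import zify ring lra.
Import Order.TTheory GRing.Theory Num.Theory.
Local Open Scope ring_scope.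
Set Implicit Arguments. Unset Strict Implicit. Unset Printing Implicit Defensive.

Lemma ext_le_refl a : ext_le a a.
Proof. by case: a => //= x. Qed.

Lemma ext_le_trans a b d : ext_le a b -> ext_le b d -> ext_le a d.
Proof.
by case: a => [x|]; case: b => [y|]; case: d => [z|] //=; apply: le_trans.
Qed.

Lemma ext_le_total a b : ext_le a b || ext_le b a.
Proof. by case: a => [x|]; case: b => [y|] //=; apply: le_total. Qed.

Lemma ext_minseq_le x s : x \in s -> ext_le (ext_minseq s) x.
Proof.
elim: s => //= y s IH; rewrite in_cons => /orP [/eqP ->|hx].
  rewrite /ext_min; case: ifP => [_|h]; first exact: ext_le_refl.
  by case/orP: (ext_le_total (ext_minseq s) y) => // h'; rewrite h' in h.
rewrite /ext_min; case: ifP => h; last exact: IH.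
exact: ext_le_trans h (IH hx).
Qed.

Lemma ext_add_le a b a' b' : ext_le a a' -> ext_le b b' -> ext_le (ext_add a b) (ext_add a' b').
Proof.
case: a => [x|]; case: b => [y|]; case: a' => [x'|]; case: b' => [y'|] //=.
by move=> h1 h2; apply: lerD.
Qed.

Section Chains.
Variables (V : finType) (E : {set {set V}}) (c : {set V} -> rat).

Lemma pairmap_chain (h : V -> V -> rat) (F : nat -> V) j m :
  pairmap h (F m) [seq F i | i <- iota m.+1 j] = [seq h (F i) (F i.+1) | i <- iota m j].
Proof. by elim: j m => //= j IH m; rewrite IH. Qed.

Lemma path_chain (F : nat -> V) j m :
  (forall i, m <= i < m + j -> adjrel E (F i) (F i.+1))%N ->
  path (adjrel E) (F m) [seq F i | i <- iota m.+1 j].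
Proof.
elim: j m => //= j IH m h; apply/andP; split.
  by apply: h; lia.
by apply: IH => i hi; apply: h; lia.
Qed.

Lemma last_chain (F : nat -> V) j m :
  last (F m) [seq F i | i <- iota m.+1 j] = F (m + j)%N.
Proof.
elim: j m => [|j IH] m /=; first by rewrite addn0.
by rewrite IH addSnnS.
Qed.

Lemma chain_dist (A : {set V}) (F : nat -> V) j :
  {in [pred i | (i <= j)%N] &, injective F} ->
  (forall i, (i < j)%N -> [set F i; F i.+1] \in E) ->
  (forall i, (i <= j)%N -> F i \in A) ->
  ext_le (dist_in E c A (F 0%N) (F j)) (Some (\sum_(i < j) c [set F i; F i.+1])).
Proof.
move=> hinj hE hA.
set s := [seq F i | i <- iota 1 j].
have hu : uniq (F 0%N :: s).
  have -> : F 0%N :: s = [seq F i | i <- iota 0 j.+1] by [].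
  rewrite map_inj_in_uniq ?iota_uniq // => x y; rewrite !mem_iota /= => hx hy.
  by apply: hinj; rewrite inE /=; lia.
have hsz : (size s < #|V|.+1)%N.
  have /card_uniqP hc := hu.
  have := max_card (mem (F 0%N :: s)); rewrite hc /=; lia.
have hcost : walk_cost c (F 0%N) s = \sum_(i < j) c [set F i; F i.+1].
  rewrite /walk_cost /s pairmap_chain big_map -(big_mkord xpredT (fun i => c [set F i; F i.+1])).
  by rewrite /index_iota subn0.
rewrite -hcost; apply: ext_minseq_le.
apply/flattenP; exists [seq Some (walk_cost c (F 0%N) (tval t))
         | t <- enum {: (size s).-tuple V}
         & [&& uniq (F 0%N :: tval t), path (adjrel E) (F 0%N) (tval t),
               last (F 0%N) (tval t) == F j & all (fun x => x \in A) (F 0%N :: tval t)]].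
  apply/mapP; exists (size s) => //; by rewrite mem_iota.
apply/mapP; exists (in_tuple s) => //.
rewrite mem_filter mem_enum /= andbT.
apply/and4P; split => //.
- apply: path_chain => i hi; have := hE i; rewrite /adjrel; apply; lia.
- by rewrite /s last_chain.
- apply/andP; split; first by apply: hA.
  apply/allP => x /mapP [i]; rewrite mem_iota => hi ->; apply: hA; lia.
Qed.

End Chains.

Section Rooted.
Variables (V : finType) (E : {set {set V}}) (VS : {set V}) (ES : {set {set V}}) (vi : V).
Hypothesis hT : is_tree E VS ES.
Hypothesis hvi : vi \in VS.

Local Notation R := (adjrel ES).

Lemma RVS x y : R x y -> x \in VS /\ y \in VS.
Proof.
case: hT => _ _ hsub _ _ h; have := hsub _ h => /subsetP hs.
by split; apply: hs; rewrite !inE eqxx ?orbT.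
Qed.

Lemma Rsym : symmetric R.
Proof. by move=> x y; rewrite /adjrel setUC. Qed.

Lemma edge_E : ES \subset E.
Proof. by case: hT. Qed.

Definition reachn n z := [exists t : n.-tuple V, path R vi t && (last vi t == z)].
Definition Pdep z n := if connect R vi z then reachn n z else n == 0%N.
Lemma exPdep z : exists n, Pdep z n.
Proof.
rewrite /Pdep; case: (boolP (connect R vi z)) => h; last by exists 0%N.
case/connectP: h => s hs hl; exists (size s).
by apply/existsP; exists (in_tuple s); rewrite /= hs -hl eqxx.
Qed.
Definition depth z := ex_minn (exPdep z).

Lemma connvi z : z \in VS -> connect R vi z.
Proof. by case: hT => _ _ _ hc _ hz; apply: hc. Qed.

Lemma depth_spec z : z \in VS ->
  reachn (depth z) z /\ forall n, reachn n z -> (depth z <= n)%N.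
Proof.
move=> hz; rewrite /depth; case: ex_minnP => m; rewrite /Pdep connvi //.
Qed.

Lemma reach0 z : reachn 0 z -> z = vi.
Proof.
move/existsP=> [t /andP [_ /eqP <-]].
by have -> : tval t = [::] by apply: size0nil; rewrite size_tuple.
Qed.

Lemma reach_vi : reachn 0 vi.
Proof. by apply/existsP; exists (in_tuple [::]); rewrite /= eqxx. Qed.

Lemma reachS n y z : reachn n y -> R y z -> reachn n.+1 z.
Proof.
move/existsP=> [t /andP [hp /eqP hl]] hyz; apply/existsP.
have hs : size (rcons t z) == n.+1 by rewrite size_rcons size_tuple.
by exists (Tuple hs); rewrite /= rcons_path hp hl hyz last_rcons eqxx.
Qed.

Lemma reach_pred n z : reachn n.+1 z -> exists2 y, reachn n y & R y z.
Proof.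
move/existsP=> [t /andP []].
have := size_tuple t; case/lastP: (tval t) => [|s x] //.
rewrite size_rcons rcons_path last_rcons => -[hs] /andP [hp hx] /eqP hxz.
exists (last vi s); last by rewrite -hxz.
by apply/existsP; exists (Tuple (introT eqP hs)); rewrite /= hp eqxx.
Qed.

Lemma depth_vi : depth vi = 0%N.
Proof. by have := (depth_spec hvi).2 0%N reach_vi; rewrite leqn0 => /eqP. Qed.

Lemma depth0 z : z \in VS -> (depth z == 0%N) = (z == vi).
Proof.
move=> hz; apply/eqP/eqP => [h|->]; last exact: depth_vi.
by have := (depth_spec hz).1; rewrite h; apply: reach0.
Qed.

Lemma depth_edge y z : R y z -> (depth z <= (depth y).+1)%N.
Proof.
move=> hyz; have [hy hz] := RVS hyz.
exact: (depth_spec hz).2 _ (reachS (depth_spec hy).1 hyz).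
Qed.

Lemma depth_par_ex z : z \in VS -> z != vi ->
  exists y, R y z && ((depth y).+1 == depth z).
Proof.
move=> hz hzv; have [h _] := depth_spec hz.
case hd: (depth z) => [|n]; first by move/eqP: hd; rewrite depth0 // (negbTE hzv).
rewrite hd in h; have [y hy hyz] := reach_pred h.
exists y; rewrite hyz /=.
have [hyV _] := RVS hyz.
have h1 := (depth_spec hyV).2 _ hy; have h2 := depth_edge hyz.
apply/eqP; lia.
Qed.

Definition par z := if z == vi then vi
  else odflt vi [pick y | R y z && ((depth y).+1 == depth z)].

Lemma par_spec z : z \in VS -> z != vi ->
  [/\ R (par z) z, (depth (par z)).+1 = depth z & par z \in VS].
Proof.
move=> hz hzv; rewrite /par (negbTE hzv).
case: pickP => [y /andP [hyz /eqP hd]|hn] /=.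
  by split=> //; exact: (RVS hyz).1.
by have [y hy] := depth_par_ex hz hzv; rewrite hn in hy.
Qed.

Lemma par_vi : par vi = vi.
Proof. by rewrite /par eqxx. Qed.

Lemma par_VS z : z \in VS -> par z \in VS.
Proof.
move=> hz; case: (eqVneq z vi) => [->|h]; first by rewrite par_vi.
by case: (par_spec hz h).
Qed.

Lemma depth_par z : z \in VS -> depth (par z) = (depth z).-1.
Proof.
move=> hz; case: (eqVneq z vi) => [->|h]; first by rewrite par_vi depth_vi.
by case: (par_spec hz h) => _ <-.
Qed.

Lemma iter_VS k z : z \in VS -> iter k par z \in VS.
Proof. by move=> hz; elim: k => //= k IH; apply: par_VS. Qed.

Lemma depth_iter k z : z \in VS -> depth (iter k par z) = (depth z - k)%N.
Proof.
move=> hz; elim: k => [|k IH] /=; first by rewrite subn0.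
rewrite depth_par ?iter_VS // IH; lia.
Qed.

Lemma iter_depth z : z \in VS -> iter (depth z) par z = vi.
Proof. by move=> hz; apply/eqP; rewrite -depth0 ?iter_VS // depth_iter // subnn. Qed.

Lemma iter_inj z i j : z \in VS -> (i <= depth z)%N -> (j <= depth z)%N ->
  iter i par z = iter j par z -> i = j.
Proof. by move=> hz hi hj /(congr1 depth); rewrite !depth_iter //; lia. Qed.

Lemma depth_lt z : z \in VS -> (depth z < #|V|)%N.
Proof.
move=> hz.
have hinj : injective (fun i : 'I_(depth z).+1 => iter i par z).
  move=> i j /iter_inj h; apply: val_inj; apply: h => //; rewrite -ltnS; exact: ltn_ord.
have := max_card [set iter (nat_of_ord i) par z | i : 'I_(depth z).+1].
by rewrite card_imset // card_ord.
Qed.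

Lemma edge_par z : z \in VS -> z != vi -> [set z; par z] \in ES.
Proof. by move=> hz hzv; case: (par_spec hz hzv); rewrite /adjrel setUC. Qed.

Lemma par_neq z : z \in VS -> z != vi -> par z != z.
Proof.
move=> hz hzv; apply/eqP => h; have := depth_par hz; rewrite h.
have : depth z != 0%N by rewrite depth0 // hzv.
lia.
Qed.

End Rooted.

Lemma eqP_neq_sym (T : eqType) (x y : T) : x != y -> y != x.
Proof. by rewrite eq_sym. Qed.

Section Opt.
Variables (V : finType) (E : {set {set V}}) (c : {set V} -> rat) (p : V -> rat)
  (VS : {set V}) (ES : {set {set V}}) (vi : V).
Hypothesis hT : is_tree E VS ES.
Hypothesis hvi : vi \in VS.
Hypothesis hc : forall e, e \in E -> 0 < c e.
Hypothesis hp : forall v, 0 <= p v.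
Hypothesis hvT : vi \notin Tp p.
Hypothesis hopt : forall VS' ES', is_tree E VS' ES' -> pc_cost c p VS ES <= pc_cost c p VS' ES'.

Local Notation par := (par ES vi).
Local Notation depth := (depth ES vi).

Lemma chain_connect (ES' : {set {set V}}) z k : z \in VS ->
  (forall i, (i < k)%N -> [set iter i par z; par (iter i par z)] \in ES') ->
  connect (adjrel ES') z (iter k par z).
Proof.
move=> hz; elim: k => [|k IH] h /=; first exact: connect0.
apply: connect_trans (IH _) _; first by move=> i hi; apply: h; lia.
by apply: connect1; rewrite /adjrel; apply: h.
Qed.

Lemma remove_tree x r : x \in VS -> r \in VS -> r != x ->
  (forall z, z \in VS -> z != x -> connect (adjrel [set e in ES | x \notin e]) z r) ->
  is_tree E (VS :\ x) [set e in ES | x \notin e].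
Proof.
move=> hx hr hrx hconn.
case: hT => _ hsub hsubV _ hacy.
split.
- by apply/set0Pn; exists r; rewrite in_setD1 hrx.
- apply/subsetP => e; rewrite inE => /andP [he _]; exact: (subsetP hsub).
- move=> e; rewrite inE => /andP [he hxe]; apply/subsetP => y hy.
  rewrite in_setD1 (subsetP (hsubV _ he)) // andbT.
  by apply: contraNneq hxe => <-.
- move=> y z; rewrite !in_setD1 => /andP [hyx hy] /andP [hzx hz].
  apply: connect_trans (hconn _ hy hyx) _.
  rewrite (sym_connect_sym (@Rsym _ _)); exact: hconn.
- move=> s hs hsz; apply/negP => hcy; have := hacy s hs hsz; apply/negP/negPn.
  by apply: sub_cycle hcy => a b; rewrite /adjrel inE => /andP [].
Qed.

Lemma remove_cost x : x \in VS ->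
  pc_cost c p (VS :\ x) [set e in ES | x \notin e] =
  pc_cost c p VS ES - \sum_(e in ES | x \in e) c e + p x.
Proof.
move=> hx; rewrite /pc_cost.
have h1 : \sum_(e in ES) c e = \sum_(e in ES | x \in e) c e + \sum_(e in ES | x \notin e) c e.
  by rewrite (bigID (fun e : {set V} => x \in e)) /=.
have h2 : \sum_(e in [set e in ES | x \notin e]) c e = \sum_(e in ES | x \notin e) c e.
  by apply: eq_bigl => e; rewrite inE.
have h3 : \sum_(v in ~: (VS :\ x)) p v = p x + \sum_(v in ~: VS) p v.
  rewrite (bigD1 x) /=; last by rewrite !inE eqxx.
  congr (_ + _); apply: eq_bigl => v; rewrite !inE; case: (eqVneq v x) => [->|hvx] /=; first by rewrite hx.
  by rewrite andbT.
rewrite h1 h2 h3; ring.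
Qed.


Local Notation iVS := (iter_VS hT hvi).
Local Notation dIt := (depth_iter hT hvi).
Local Notation d0 := (depth0 hT hvi).
Local Notation ePar := (edge_par hT hvi).

Lemma Tp_le0 v : v \notin Tp p -> p v <= 0.
Proof. by rewrite inE -leNgt. Qed.

Lemma sumES_ge0 (P : pred {set V}) : 0 <= \sum_(e in ES | P e) c e.
Proof.
apply: sumr_ge0 => e /andP [he _]; apply: ltW; apply: hc.
exact: (subsetP (edge_E hT)).
Qed.

Lemma drop_lt x e0 : x \in VS -> e0 \in ES -> x \in e0 -> x \notin Tp p ->
  pc_cost c p (VS :\ x) [set e in ES | x \notin e] < pc_cost c p VS ES.
Proof.
move=> hx he0 hxe0 hxT; rewrite remove_cost //.
have h1 : c e0 <= \sum_(e in ES | x \in e) c e.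
  rewrite (bigD1 e0) /=; last by rewrite he0 hxe0.
  rewrite lerDl; apply: sumr_ge0 => e /andP [/andP [he _] _]; apply: ltW; apply: hc.
  exact: (subsetP (edge_E hT)).
have h2 := hc (subsetP (edge_E hT) _ he0).
have h3 := Tp_le0 hxT.
lra.
Qed.

Lemma noleaf x : x \in VS -> x != vi -> x \notin Tp p ->
  exists y, [/\ y \in VS, y != vi & par y = x].
Proof.
move=> hx hxv hxT.
case: (pickP (fun y => (y \in VS) && (y != vi) && (par y == x))) =>
  [y /andP [/andP [hy hyv] /eqP hyx]|hn]; first by exists y.
exfalso.
have hnot : forall z, z \in VS -> z != x -> forall i, (i <= depth z)%N -> iter i par z != x.
  move=> z hz hzx; elim => [|i IH] hi //=.
  have hu : iter i par z \in VS by apply: iVS.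
  have huv : iter i par z != vi by rewrite -(d0 hu) dIt //; move: hi; clear; lia.
  by move: (hn (iter i par z)); rewrite hu huv /= => ->.
have hconn : forall z, z \in VS -> z != x ->
    connect (adjrel [set e in ES | x \notin e]) z vi.
  move=> z hz hzx; rewrite -[X in connect _ _ X](iter_depth hT hvi hz); apply: chain_connect => // i hi.
  have hw : iter i par z \in VS by apply: iVS.
  have hwv : iter i par z != vi by rewrite -(d0 hw) dIt //; move: hi; clear; lia.
  rewrite inE ePar //= !inE negb_or.
  rewrite eq_sym (hnot z hz hzx i (ltnW hi)) /=.
  have := hnot z hz hzx i.+1 hi; rewrite /= eq_sym; done.
have htree := remove_tree hx hvi (eqP_neq_sym hxv) hconn.
have h1 := hopt htree.
have h2 := drop_lt hx (ePar hx hxv) (set21 _ _) hxT.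
lra.
Qed.

Lemma anc1 z : z \in VS -> z != vi ->
  [/\ iter (depth z).-1 par z \in VS, iter (depth z).-1 par z != vi
     & par (iter (depth z).-1 par z) = vi].
Proof.
move=> hz hzv.
have hd : depth z != 0%N by rewrite d0 // hzv.
split; first by apply: iVS.
  by rewrite -(d0 (iVS _ hz)) dIt //; move: hd; clear; lia.
by rewrite -iterS prednK ?lt0n // (iter_depth hT hvi hz).
Qed.

Lemma sumC1 a : \sum_(v in ~: [set a]) p v = \sum_v p v - p a.
Proof.
rewrite [X in _ = X - _](bigD1 a) //=.
have -> : \sum_(v in ~: [set a]) p v = \sum_(v | v != a) p v.
  by apply: eq_bigl => v; rewrite !inE.
ring.
Qed.

Lemma tree_single t : is_tree E [set t] set0.
Proof.
split.
- by apply/set0Pn; exists t; rewrite inE.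
- exact: sub0set.
- by move=> e; rewrite inE.
- by move=> x y; rewrite !inE => /eqP -> /eqP ->; exact: connect0.
- by move=> s hs; case: s hs => [|x [|y s]] //= _ _; rewrite /adjrel inE.
Qed.

Definition ch y := (y \in VS) && (y != vi) && (par y == vi).

Lemma two_children : (exists t, t \in Tp p) ->
  exists w1 w2, [&& ch w1, ch w2 & w1 != w2].
Proof.
move=> [t ht].
case: (pickP ch) => [w1 hw1|hn].
  case: (pickP (fun y => ch y && (y != w1))) => [w2 /andP [hw2 hne]|hn2].
    by exists w1, w2; rewrite hw1 hw2 eq_sym hne.
  exfalso; move: (hw1) => /andP [/andP [hw1V hw1v] /eqP hpw1].
  have hconn : forall z, z \in VS -> z != vi ->
      connect (adjrel [set e in ES | vi \notin e]) z w1.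
    move=> z hz hzv; have [hwV hwv hpw] := anc1 hz hzv.
    have hw : iter (depth z).-1 par z = w1.
      have := hn2 (iter (depth z).-1 par z); rewrite /ch hwV hwv hpw eqxx /=.
      by move/negbT; rewrite negbK => /eqP.
    rewrite -hw; apply: chain_connect => // i hi.
    have hu : iter i par z \in VS by apply: iVS.
    have huv : iter i par z != vi by rewrite -(d0 hu) dIt //; move: hi; clear; lia.
    have hpu : par (iter i par z) != vi.
      have hu' : iter i.+1 par z \in VS by apply: iVS.
      by rewrite -iterS -(d0 hu') dIt //; move: hi; clear; lia.
    rewrite inE ePar //= !inE negb_or eq_sym huv eq_sym hpu.
    done.
  have htree := remove_tree hvi hw1V hw1v hconn.
  have h1 := hopt htree.
  have h2 := drop_lt hvi (ePar hw1V hw1v) (_ : vi \in [set w1; par w1]) hvT.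
  rewrite hpw1 set22 in h2; have h3 := h2 isT.
  by have := lt_le_trans h3 h1; rewrite ltxx.
exfalso.
have hVS : VS = [set vi].
  apply/setP => z; rewrite inE; apply/idP/eqP => [hz|->//].
  apply/eqP; apply: contraT => hzv; have [h1 h2 h3] := anc1 hz hzv.
  by have := hn (iter (depth z).-1 par z); rewrite /ch h1 h2 h3 eqxx.
have h1 := hopt (tree_single t).
move: h1; rewrite /pc_cost big_set0 hVS !sumC1.
have h2 : 0 <= \sum_(e in ES) c e.
  apply: sumr_ge0 => e he; apply: ltW; apply: hc; exact: (subsetP (edge_E hT)).
have h3 := Tp_le0 hvT.
move: ht; rewrite inE => h4.
lra.
Qed.

End Opt.

Section Generic.
Variable T : finType.

Lemma sum_ind (U X : {set T}) (g : T -> rat) : X \subset U ->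
  \sum_(x in X) g x = \sum_(x in U) (if x \in X then g x else 0).
Proof.
move=> hX; rewrite -big_mkcondr; apply: eq_bigl => x.
case hx: (x \in X); rewrite ?andbT ?andbF //.
by rewrite (subsetP hX).
Qed.

Lemma sum_subset_le (X U : {set T}) (g : T -> rat) : X \subset U ->
  (forall x, x \in U -> 0 <= g x) -> \sum_(x in X) g x <= \sum_(x in U) g x.
Proof.
move=> hX hg; rewrite (sum_ind g hX); apply: ler_sum => x hx.
by case: (x \in X) => //; apply: hg.
Qed.

Lemma sum_pack (U A B T' : {set T}) (W : T -> {set T}) (f : T -> rat) :
  (forall x, x \in U -> 0 <= f x) -> A \subset U -> B \subset U ->
  (forall t, t \in T' -> W t \subset U) ->
  (forall x, x \in A -> x \in B -> False) ->
  (forall t x, t \in T' -> x \in W t -> (x \notin A) && (x \notin B)) ->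
  (forall t t' x, t \in T' -> t' \in T' -> x \in W t -> x \in W t' -> t = t') ->
  \sum_(x in A) f x + \sum_(x in B) f x + \sum_(t in T') \sum_(x in W t) f x
    <= \sum_(x in U) f x.
Proof.
move=> hf hA hB hW hAB hWAB hWW.
have hWs : \sum_(t in T') \sum_(x in W t) f x =
    \sum_(t in T') \sum_(x in U) (if x \in W t then f x else 0).
  by apply: eq_bigr => t ht; rewrite (sum_ind f (hW t ht)).
rewrite hWs (sum_ind f hA) (sum_ind f hB).
rewrite exchange_big /=.
rewrite -!big_split /=; apply: ler_sum => x hx.
case: (boolP (x \in A)) => hxA.
  have hxB : x \notin B by apply/negP => hxB; apply: (hAB x).
  rewrite (negbTE hxB) big1 ?addr0 //.
  move=> t ht; case: ifP => // hxW; have := hWAB t x ht hxW; by rewrite hxA.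
case: (boolP (x \in B)) => hxB.
  rewrite big1 ?add0r ?addr0 //.
  move=> t ht; case: ifP => // hxW; have := hWAB t x ht hxW; by rewrite hxB andbF.
rewrite !add0r.
case: (pickP (fun t => (t \in T') && (x \in W t))) => [t0 /andP [ht0 hx0]|hn].
  rewrite (bigD1 t0) //= hx0 big1 ?addr0 //.
  move=> t /andP [ht htt0]; case: ifP => // hxW.
  by have := hWW t t0 x ht ht0 hxW hx0; move/eqP: htt0.
rewrite big1; first exact: hf.
move=> t ht; case: ifP => // hxW; by have := hn t; rewrite ht hxW.
Qed.

End Generic.

Lemma ext_add_comm a b : ext_add a b = ext_add b a.
Proof. by case: a => [x|]; case: b => [y|] //=; rewrite addrC. Qed.

Lemma sorted_two (T : eqType) (D : T -> ext) (s : seq T) (x0 a b : T) :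
  sorted (fun u v => ext_le (D u) (D v)) s -> a \in s -> b \in s -> a != b ->
  ext_le (ext_add (D (nth x0 s 0)) (D (nth x0 s 1))) (ext_add (D a) (D b)).
Proof.
move=> hs ha hb hab.
have htr : transitive (fun u v => ext_le (D u) (D v)).
  by move=> y x z h1 h2; apply: ext_le_trans h1 h2.
have hrf : reflexive (fun u v => ext_le (D u) (D v)) by move=> x; apply: ext_le_refl.
have hle := sorted_leq_nth htr hrf x0 hs.
have hia := index_mem a s; have hib := index_mem b s.
rewrite ha in hia; rewrite hb in hib.
have hne : index a s != index b s.
  by apply: contra hab => /eqP h; rewrite -(nth_index x0 ha) h nth_index.
have [hlt|hgt] : (index a s < index b s)%N \/ (index b s < index a s)%N.
  move: hne; clear; lia.
- apply: ext_add_le.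
    rewrite -[X in ext_le _ (D X)](nth_index x0 ha); apply: hle; rewrite ?inE /=; move: hia; clear; lia.
  rewrite -[X in ext_le _ (D X)](nth_index x0 hb); apply: hle; rewrite ?inE /=; move: hib hlt; clear; lia.
- rewrite (ext_add_comm (D a)); apply: ext_add_le.
    rewrite -[X in ext_le _ (D X)](nth_index x0 hb); apply: hle; rewrite ?inE /=; move: hib; clear; lia.
  rewrite -[X in ext_le _ (D X)](nth_index x0 ha); apply: hle; rewrite ?inE /=; move: hia hgt; clear; lia.
Qed.

Lemma sorted_sum (T : finType) (g : T -> rat) (A : {set T}) (ts : seq T) x0 a b :
  perm_eq ts (enum A) -> sorted (fun u v => g u <= g v) ts ->
  a \in A -> b \in A -> a != b ->
  \sum_(k < #|A| - 2) g (nth x0 ts k) <= \sum_(t in A :\ a :\ b) g t.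
Proof.
move=> hp hs ha hb hab.
have hsz : size ts = #|A| by rewrite (perm_size hp) cardE.
have hA2 : (2 <= #|A|)%N.
  have <- : #|[set a; b]| = 2%N by rewrite cards2 hab.
  apply: subset_leq_card; apply/subsetP => x; rewrite !inE => /orP [] /eqP ->.
    exact: ha.
  exact: hb.
have hmem : forall x, (x \in ts) = (x \in A) by move=> x; rewrite (perm_mem hp) mem_enum.
have htot : \sum_(t in A) g t = \sum_(k < size ts) g (nth x0 ts k).
  by rewrite -big_enum -(perm_big _ hp) (big_nth x0) big_mkord.
have hab2 : \sum_(t in A) g t = g a + g b + \sum_(t in A :\ a :\ b) g t.
  rewrite (bigD1 a) //= (bigD1 b) /=; last by rewrite eq_sym hab hb.
  rewrite addrA; congr (_ + _); apply: eq_bigl => x; rewrite !inE; case: (x \in A); rewrite ?andbF ?andbT //=.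
  by rewrite andbC.
set n := (#|A| - 2)%N.
have hn : size ts = n.+2 by rewrite hsz /n; move: hA2; clear; lia.
rewrite hn in htot.
rewrite 2!big_ord_recr /= in htot.
have htr : transitive (fun u v => g u <= g v) by move=> y x z; apply: le_trans.
have hrf : reflexive (fun u v => g u <= g v) by move=> x; apply: lexx.
have hle := sorted_leq_nth htr hrf x0 hs.
have hia := index_mem a ts; have hib := index_mem b ts.
rewrite hmem ha hn in hia; rewrite hmem hb hn in hib.
have hne : index a ts != index b ts.
  apply: contra hab => /eqP h; rewrite -(nth_index x0 (_ : a \in ts)) ?hmem //.
  by rewrite h nth_index // hmem.
have hga : g a = g (nth x0 ts (index a ts)) by rewrite nth_index // hmem.
have hgb : g b = g (nth x0 ts (index b ts)) by rewrite nth_index // hmem.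
have key : g a + g b <= g (nth x0 ts n) + g (nth x0 ts n.+1).
  have hmax : forall i, (i < n.+2)%N -> g (nth x0 ts i) <= g (nth x0 ts n.+1).
    by move=> i hi; apply: hle; rewrite ?inE /= ?hn //; move: hi; clear; lia.
  have hsec : forall i, (i <= n)%N -> g (nth x0 ts i) <= g (nth x0 ts n).
    by move=> i hi; apply: hle; rewrite ?inE /= ?hn //; move: hi; clear; lia.
  case: (eqVneq (index a ts) n.+1) => hia1.
    have hib1 : (index b ts <= n)%N by move: hne hib; rewrite hia1; clear; lia.
    rewrite hga hgb addrC; apply: lerD; [exact: hsec | exact: hmax].
  have hia1' : (index a ts <= n)%N by move: hia1 hia; clear; lia.
  rewrite hga hgb; apply: lerD; [exact: hsec | exact: hmax].
have : \sum_(i < n) g (nth x0 ts i) = \sum_(t in A) g t - g (nth x0 ts n) - g (nth x0 ts n.+1).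
  by rewrite htot; ring.
move=> ->; rewrite hab2.
lra.
Qed.

Section Main.
Variables (V : finType) (E : {set {set V}}) (c : {set V} -> rat) (p : V -> rat)
  (VS : {set V}) (ES : {set {set V}}) (vi : V) (H : V -> {set V}).
Hypothesis hT : is_tree E VS ES.
Hypothesis hvi : vi \in VS.
Hypothesis hc : forall e, e \in E -> 0 < c e.
Hypothesis hp : forall v, 0 <= p v.
Hypothesis hvT : vi \notin Tp p.
Hypothesis hopt : forall VS' ES', is_tree E VS' ES' -> pc_cost c p VS ES <= pc_cost c p VS' ES'.
Hypothesis hH : terminal_regions E p H.

Local Notation par := (par ES vi).
Local Notation depth := (depth ES vi).
Local Notation iVS := (iter_VS hT hvi).
Local Notation dIt := (depth_iter hT hvi).
Local Notation d0 := (depth0 hT hvi).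
Local Notation ePar := (edge_par hT hvi).

Lemma own x : exists2 t, t \in Tp p & x \in H t.
Proof. by case: hH => h _ _ _; apply: h. Qed.

Lemma disj t t' x : t \in Tp p -> t' \in Tp p -> x \in H t -> x \in H t' -> t = t'.
Proof.
case: hH => _ hd _ _ ht ht' hx hx'; apply/eqP; apply: contraT => hne.
have := hd t t' ht ht' hne; rewrite disjoint_subset => /subsetP /(_ x hx).
by rewrite inE hx'.
Qed.

Lemma regT t x : t \in Tp p -> x \in H t -> x \in Tp p -> x = t.
Proof.
case: hH => _ _ hI _ ht hx hxT.
have : x \in H t :&: Tp p by rewrite inE hx hxT.
by rewrite hI // in_set1 => /eqP.
Qed.

Definition pref t x := (t \in VS) && [exists i : 'I_(depth t).+1,
  (iter i par t == x) && [forall k : 'I_(depth t).+1, (k <= i)%N ==> (iter k par t \in H t)]].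

Lemma prefE t x : pref t x -> exists i, [/\ t \in VS, (i <= depth t)%N, iter i par t = x
  & forall k, (k <= i)%N -> iter k par t \in H t].
Proof.
move=> /andP [ht /existsP [i /andP [/eqP hi /forallP hk]]].
exists i; split=> //; first by rewrite -ltnS.
move=> k hki; have hk' : (k < (depth t).+1)%N by have := ltn_ord i; move: hki; clear; lia.
by have := hk (Ordinal hk'); rewrite /= hki.
Qed.

Lemma prefI t i : t \in VS -> (i <= depth t)%N ->
  (forall k, (k <= i)%N -> iter k par t \in H t) -> pref t (iter i par t).
Proof.
move=> ht hi hk; rewrite /pref ht; apply/existsP.
have hi' : (i < (depth t).+1)%N by move: hi; clear; lia.
exists (Ordinal hi'); rewrite /= eqxx /=; apply/forallP => k; apply/implyP; exact: hk.
Qed.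

Lemma pref_H t x : pref t x -> x \in H t.
Proof. by move/prefE=> [i [_ _ <- hk]]; apply: hk. Qed.

Lemma descent m : forall x, x \in VS -> x != vi -> (#|V| - depth x <= m)%N ->
  exists a i, [/\ a \in Tp p, a \in VS, iter i par a = x, (i < depth a)%N &
     (forall k, (0 < k <= i)%N -> iter k par a \notin Tp p) /\
     (forall k t, (k <= i)%N -> t \in Tp p -> t != a -> ~~ pref t (iter k par a))].
Proof.
elim: m => [|m IH] x hx hxv hm.
  have := depth_lt hT hvi hx; move: hm; clear; lia.
case hxT: (x \in Tp p).
  exists x, 0%N; split=> //.
    by rewrite lt0n d0.
  split; first by move=> k; clear; lia.
  move=> k t hk ht htx; rewrite leqn0 in hk; move/eqP: hk => -> /=.
  apply/negP => /pref_H hxt; have := regT ht hxt hxT => hxt'.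
  by rewrite hxt' eqxx in htx.
have [g hg hxg] := own x.
have [y [hy hyv hpy hpref]] : exists y, [/\ y \in VS, y != vi, par y = x &
    forall t, t \in Tp p -> pref t x -> pref t y].
  case/orP: (orbN (pref g x)) => hpg.
    have [i [hgV hi hix hk]] := prefE hpg.
    have hi0 : i != 0%N by apply/eqP => hi0; move: hxT; rewrite -hix hi0; change (iter 0 par g) with g; rewrite hg.
    exists (iter i.-1 par g).
    have hyV : iter i.-1 par g \in VS by apply: iVS.
    have hpar : par (iter i.-1 par g) = x by rewrite -iterS prednK ?lt0n.
    have hxd : depth x != 0%N by rewrite d0.
    have hdx : depth x = (depth g - i)%N by rewrite -hix dIt.
    split=> //.
      by rewrite -(d0 hyV) dIt //; move: hdx hxd hi0 hi; clear; lia.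
    move=> t ht hptx; have htg : t = g by apply: (disj ht hg (pref_H hptx) hxg).
    rewrite htg; apply: prefI => //; first by move: hi; clear; lia.
    move=> k hk'; apply: hk; move: hk' hi0; clear; lia.
  have [y [hy hyv hpy]] := noleaf hT hvi hc hvT hopt hx hxv (negbT hxT).
  exists y; split=> // t ht hptx.
  have htg : t = g by apply: (disj ht hg (pref_H hptx) hxg).
  by rewrite htg (negbTE hpg) in hptx.
have hdy : depth y = (depth x).+1.
  by case: (par_spec hT hvi hy hyv) => _ <- _; rewrite hpy.
have [a [i [ha haV hia hid [hnt hnp]]]] := IH y hy hyv ltac:(move: hm hdy; clear; lia).
exists a, i.+1.
have hia' : iter i.+1 par a = x by rewrite iterS hia.
have hxd : depth x != 0%N by rewrite d0.
split=> //.
  by move: hxd; rewrite -hia' dIt //; clear; lia.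
split.
  move=> k /andP [hk0 hk]; case: (ltngtP k i.+1) => [hlt|//|->]; last by rewrite hia' hxT.
  by apply: hnt; move: hk0 hlt; clear; lia.
  by move: hk; clear; lia.
move=> k t hk ht hta; case: (ltngtP k i.+1) => [hlt|//|->].
  by apply: hnp => //; move: hlt; clear; lia.
  by move: hk; clear; lia.
rewrite hia'; apply/negP => hptx.
by have := hnp i t (leqnn i) ht hta; rewrite hia (hpref t ht hptx).
Qed.


Hypothesis ht0 : exists t, t \in Tp p.

Definition fe x := c [set x; par x].

Lemma t_in_H t : t \in Tp p -> t \in H t.
Proof.
case: hH => _ _ hI _ ht.
have : t \in H t :&: Tp p by rewrite hI // in_set1.
by rewrite inE => /andP [].
Qed.

Lemma choose_w1 : exists w1, ch VS ES vi w1 /\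
  (forall t, t \in Tp p -> pref t vi -> pref t w1).
Proof.
case: (pickP (fun g => (g \in Tp p) && pref g vi)) => [g /andP [hg hgv]|hn].
  have [i [hgV hi hiv hk]] := prefE hgv.
  have hgvi : g != vi by apply/eqP => hgv'; move: hvT; rewrite -hgv' hg.
  have hid : i = depth g.
    have := congr1 depth hiv; rewrite dIt // (depth_vi hT hvi).
    by move: hi; clear; lia.
  have [h1 h2 h3] := anc1 hT hvi hgV hgvi.
  exists (iter (depth g).-1 par g); split; first by rewrite /ch h1 h2 h3 eqxx.
  move=> t ht hptv; have htg : t = g := disj ht hg (pref_H hptv) (pref_H hgv).
  rewrite htg; apply: prefI => //; first exact: leq_pred.
  move=> k hk'; apply: hk; move: hk' hid; clear; lia.
have [w1 [w2 /and3P [h1 _ _]]] := two_children hT hvi hc hvT hopt ht0.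
exists w1; split=> // t ht hptv; by have := hn t; rewrite ht hptv.
Qed.

Lemma branch w : ch VS ES vi w -> exists a, [/\ a \in Tp p, a \in VS,
   iter (depth a).-1 par a = w, (0 < depth a)%N &
   (forall k, (0 < k < depth a)%N -> iter k par a \notin Tp p) /\
   (forall k t, (k < depth a)%N -> t \in Tp p -> t != a -> ~~ pref t (iter k par a))].
Proof.
move=> /andP [/andP [hw hwv] /eqP hpw].
have hdw : depth w = 1%N.
  by case: (par_spec hT hvi hw hwv) => _ <- _; rewrite hpw (depth_vi hT hvi).
have [a [i [ha haV hia hid [hnt hnp]]]] := descent (m:=#|V|) hw hwv (leq_subr _ _).
have hi : i = (depth a).-1.
  by move: hdw; rewrite -hia dIt //; move: hid; clear; lia.
exists a; split=> //; first by rewrite -hi.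
  by move: hid; clear; lia.
split.
  by move=> k hk; apply: hnt; move: hk hi hid; clear; lia.
by move=> k t hk; apply: hnp; move: hk hi hid; clear; lia.
Qed.

Definition chainset z j := [set iter (nat_of_ord k) par z | k : 'I_j].

Lemma chainsetP z j x : x \in chainset z j -> exists2 k, (k < j)%N & x = iter k par z.
Proof. by move/imsetP => [k _ ->]; exists k. Qed.

Lemma chain_sum z j : z \in VS -> (j <= depth z)%N ->
  \sum_(x in chainset z j) fe x = \sum_(k < j) fe (iter k par z).
Proof.
move=> hz hj; rewrite /chainset big_imset //.
move=> k k' _ _ /(iter_inj hT hvi hz) h; apply: val_inj; apply: h.
  by have := ltn_ord k; move: hj; clear; lia.
by have := ltn_ord k'; move: hj; clear; lia.
Qed.

Lemma rpc_le_p t : rpc E c p H t <= p t.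
Proof.
rewrite /rpc; case: (ext_minseq _) => [x|] //=.
by rewrite ge_min lexx.
Qed.

Lemma rpc_bound t j : t \in VS -> (j <= depth t)%N -> iter j par t \notin H t ->
  rpc E c p H t <= \sum_(k < j) fe (iter k par t).
Proof.
move=> ht hj hjH.
have hd := chain_dist (E:=E) c (A:=setT) (F := fun i => iter i par t) (j := j).
have hd' : ext_le (dist E c t (iter j par t)) (Some (\sum_(k < j) fe (iter k par t))).
  apply: hd.
  - move=> x y; rewrite !inE => hx hy; apply: (iter_inj hT hvi ht); move: hj hx hy; clear; lia.
  - move=> i hi; apply: (subsetP (edge_E hT)); apply: ePar; first exact: iVS.
    by rewrite -(d0 (iVS _ ht)) dIt //; move: hi hj; clear; lia.
  - by move=> i _; rewrite inE.
have hm : ext_le (ext_minseq [seq dist E c t v | v <- enum (~: H t)]) (dist E c t (iter j par t)).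
  by apply: ext_minseq_le; apply: map_f; rewrite mem_enum inE.
have := ext_le_trans hm hd'.
rewrite /rpc; case: (ext_minseq _) => [x|] //= hx.
by rewrite ge_min hx orbT.
Qed.

Lemma dbar_bound a : a \in Tp p -> a \in VS -> (0 < depth a)%N ->
  (forall k, (0 < k < depth a)%N -> iter k par a \notin Tp p) ->
  ext_le (dbar E c p vi a) (Some (\sum_(k < depth a) fe (iter k par a))).
Proof.
move=> ha haV hd hnt.
set d := depth a.
have hd' := chain_dist (E:=E) c (A:=~: (Tp p :\ vi :\ a)) (F := fun i => iter (d - i) par a) (j := d).
have hF : forall i, (i < d)%N -> iter (d - i) par a = par (iter (d - i.+1) par a).
  by move=> i hi; rewrite -iterS; congr iter; move: hi; clear; lia.
have := hd' _ _ _.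
rewrite subn0 subnn (iter_depth hT hvi haV) /=.
have -> : \sum_(i < d) c [set iter (d - i) par a; iter (d - i.+1) par a] =
          \sum_(k < d) fe (iter k par a).
  rewrite (reindex_inj rev_ord_inj) /=; apply: eq_bigr => i _.
  rewrite /fe hF ?rev_ord_proof // setUC.
  have -> : (d - (d - i.+1).+1 = i)%N by have := ltn_ord i; clear; lia.
  by [].
apply.
- move=> x y; rewrite !inE => hx hy /(iter_inj hT hvi haV) h.
  by move: h hx hy; clear; lia.
- move=> i hi; rewrite hF // setUC; apply: (subsetP (edge_E hT)); apply: ePar; first exact: iVS.
  by rewrite -(d0 (iVS _ haV)) dIt //; move: hi; clear; lia.
- move=> i hi; case: (posnP i) => [->|hi0].
    by rewrite !inE subn0 (iter_depth hT hvi haV) eqxx /= andbF.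
  case: (ltnP i d) => hid.
    have := hnt (d - i)%N ltac:(move: hi0 hid; rewrite /d; clear; lia).
    by rewrite !inE => /negbTE ->; rewrite !andbF.
  have -> : (d - i = 0)%N by move: hid; clear; lia.
  by rewrite !inE eqxx.
Qed.


Lemma fe_ge0 x : x \in VS :\ vi -> 0 <= fe x.
Proof.
rewrite in_setD1 => /andP [hxv hx]; apply: ltW; apply: hc.
by apply: (subsetP (edge_E hT)); apply: ePar.
Qed.

Lemma edges_le : \sum_(x in VS :\ vi) fe x <= \sum_(e in ES) c e.
Proof.
have hinj : {in VS :\ vi &, injective (fun x => [set x; par x])}.
  move=> x y; rewrite !in_setD1 => /andP [hxv hx] /andP [hyv hy] hxy.
  apply/eqP; apply: contraT => hne.
  have hx1 : x \in [set y; par y] by rewrite -hxy set21.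
  have hy1 : y \in [set x; par x] by rewrite hxy set21.
  rewrite !inE (negbTE hne) /= in hx1; rewrite !inE eq_sym (negbTE hne) /= in hy1.
  have h1 := par_spec hT hvi hx hxv; have h2 := par_spec hT hvi hy hyv.
  case: h1 => _ h1 _; case: h2 => _ h2 _.
  move/eqP: hx1 => hx1; move/eqP: hy1 => hy1.
  rewrite -hx1 in h2; rewrite -hy1 in h1.
  move: h1 h2; clear; lia.
have -> : \sum_(x in VS :\ vi) fe x = \sum_(e in [set [set x; par x] | x in VS :\ vi]) c e.
  by rewrite big_imset.
apply: sum_subset_le.
  apply/subsetP => e /imsetP [x]; rewrite in_setD1 => /andP [hxv hx] ->.
  exact: ePar.
by move=> e he; apply: ltW; apply: hc; apply: (subsetP (edge_E hT)).
Qed.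

Lemma Wset t j : t \in VS -> (j <= depth t)%N ->
  iter j par t \notin H t -> (forall k, (k < j)%N -> iter k par t \in H t) ->
  [set x | pref t x] = chainset t j.
Proof.
move=> ht hj hjH hk; apply/setP => x; rewrite inE; apply/idP/idP.
  move/prefE => [i [_ hi hix hki]].
  have hij : (i < j)%N.
    rewrite ltnNge; apply/negP => hji; have := hki j hji; by rewrite (negbTE hjH).
  by apply/imsetP; exists (Ordinal hij).
move/chainsetP => [k hkj ->]; apply: prefI => //.
  by move: hkj hj; clear; lia.
by move=> k' hk'; apply: hk; move: hk' hkj; clear; lia.
Qed.

Lemma anc_top a w x : a \in VS -> iter (depth a).-1 par a = w -> (0 < depth a)%N ->
  x \in chainset a (depth a) -> iter (depth x).-1 par x = w.
Proof.
move=> haV haw hda /chainsetP [k hk ->].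
rewrite dIt // -iterD -haw; congr iter; move: hk; clear; lia.
Qed.

Lemma chain_sub z j : z \in VS -> (j <= depth z)%N -> chainset z j \subset VS :\ vi.
Proof.
move=> hz hj; apply/subsetP => x /chainsetP [k hk ->].
rewrite in_setD1 iVS // andbT -(d0 (iVS _ hz)) dIt //.
by move: hk hj; clear; lia.
Qed.

Lemma main_bound : exists a b, [/\ a \in Tp p, b \in Tp p, a != b &
  ext_le (ext_add (ext_add (dbar E c p vi a) (dbar E c p vi b))
                  (Some (\sum_(t in Tp p :\ a :\ b) rpc E c p H t)))
         (Some (pc_cost c p VS ES))].
Proof.
have [w1 [hw1 hP1]] := choose_w1.
have [u1 [u2 /and3P [hu1 hu2 hu12]]] := two_children hT hvi hc hvT hopt ht0.
have [w2 [hw2 hw21]] : exists w2, ch VS ES vi w2 /\ w2 != w1.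
  case: (eqVneq u1 w1) => [e|hne]; last by exists u1.
  by exists u2; rewrite -e eq_sym.
have [a [ha haV haw hda [hnta hnpa]]] := branch hw1.
have [b [hb hbV hbw hdb [hntb hnpb]]] := branch hw2.
have hab : a != b.
  by apply: contra hw21 => /eqP e; rewrite -hbw -haw e.
exists a, b; split=> //.
set T' := [set t in Tp p | (t \in VS) && (t != a) && (t != b)].
have hexit : forall t, t \in T' -> exists j, [/\ (j <= depth t)%N,
    iter j par t \notin H t & forall k, (k < j)%N -> iter k par t \in H t].
  move=> t; rewrite inE => /andP [ht /andP [/andP [htV hta] htb]].
  have hex : exists j, (j <= depth t)%N && (iter j par t \notin H t).
    case: (pickP (fun j : 'I_(depth t).+1 => iter j par t \notin H t)) => [j hj|hn].
      by exists j; rewrite hj andbT -ltnS.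
    exfalso.
    have hpv : pref t vi.
      rewrite -(iter_depth hT hvi htV); apply: prefI => // k hk.
      have hk' : (k < (depth t).+1)%N by move: hk; clear; lia.
      by have := hn (Ordinal hk'); move/negbT; rewrite negbK.
    have := hP1 t ht hpv; rewrite -haw.
    have := hnpa (depth a).-1 t ltac:(move: hda; clear; lia) ht hta.
    by move/negbTE => ->.
  case: (ex_minnP hex) => j /andP [hj hjH] hmin.
  exists j; split=> // k hk; apply: contraT => hkH.
  have := hmin k; rewrite hkH andbT.
  have -> : (k <= depth t)%N by move: hk hj; clear; lia.
  by move=> /(_ isT); move: hk; clear; lia.
set W := fun t => [set x | pref t x].
have hWsum : forall t, t \in T' -> rpc E c p H t <= \sum_(x in W t) fe x.
  move=> t htT; have [j [hj hjH hk]] := hexit t htT.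
  move: (htT); rewrite inE => /andP [_ /andP [/andP [htV _] _]].
  rewrite /W (Wset htV hj hjH hk) chain_sum //.
  exact: rpc_bound.
have hpack := sum_pack (U := VS :\ vi) (A := chainset a (depth a)) (B := chainset b (depth b))
  (T' := T') (W := W) (f := fe) fe_ge0 (chain_sub haV (leqnn _)) (chain_sub hbV (leqnn _)).
have hWU : forall t, t \in T' -> W t \subset VS :\ vi.
  move=> t htT; have [j [hj hjH hk]] := hexit t htT.
  move: (htT); rewrite inE => /andP [_ /andP [/andP [htV _] _]].
  by rewrite /W (Wset htV hj hjH hk); apply: chain_sub.
have hAB : forall x, x \in chainset a (depth a) -> x \in chainset b (depth b) -> False.
  move=> x hxa hxb; have := anc_top haV haw hda hxa; rewrite (anc_top hbV hbw hdb hxb).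
  by move=> e; rewrite e eqxx in hw21.
have hWAB : forall t x, t \in T' -> x \in W t ->
    (x \notin chainset a (depth a)) && (x \notin chainset b (depth b)).
  move=> t x; rewrite inE => /andP [ht /andP [/andP [htV hta] htb]].
  rewrite /W inE => hpx; apply/andP; split; apply/negP => /chainsetP [k hk hxk].
    by have := hnpa k t hk ht hta; rewrite -hxk hpx.
  by have := hnpb k t hk ht htb; rewrite -hxk hpx.
have hWW : forall t t' x, t \in T' -> t' \in T' -> x \in W t -> x \in W t' -> t = t'.
  move=> t t' x htT ht'T hx hx'.
  have ht : t \in Tp p by move: htT; rewrite inE => /andP [].
  have ht' : t' \in Tp p by move: ht'T; rewrite inE => /andP [].
  move: hx hx'; rewrite /W !inE => hx hx'.
  exact: disj ht ht' (pref_H hx) (pref_H hx').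
have hP := hpack hWU hAB hWAB hWW.
rewrite (chain_sum haV (leqnn _)) (chain_sum hbV (leqnn _)) in hP.
have hda' := dbar_bound ha haV hda hnta.
have hdb' := dbar_bound hb hbV hdb hntb.
set SA := \sum_(k < depth a) fe (iter k par a) in hP hda'.
set SB := \sum_(k < depth b) fe (iter k par b) in hP hdb'.
have hT'sum : \sum_(t in T') rpc E c p H t <= \sum_(t in T') \sum_(x in W t) fe x.
  by apply: ler_sum => t; apply: hWsum.
have hout : \sum_(t in Tp p :\: VS) rpc E c p H t <= \sum_(v in ~: VS) p v.
  have h1 : \sum_(t in Tp p :\: VS) rpc E c p H t <= \sum_(t in Tp p :\: VS) p t.
    by apply: ler_sum => t _; apply: rpc_le_p.
  have h2 : \sum_(t in Tp p :\: VS) p t <= \sum_(v in ~: VS) p v.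
    apply: sum_subset_le; last by move=> v _; apply: hp.
    by apply/subsetP => v; rewrite inE [v \in ~: VS]inE => /andP [].
  exact: le_trans h1 h2.
have hsplit : \sum_(t in Tp p :\ a :\ b) rpc E c p H t =
    \sum_(t in T') rpc E c p H t + \sum_(t in Tp p :\: VS) rpc E c p H t.
  rewrite (bigID (fun t => t \in VS)) /=; congr (_ + _); apply: eq_bigl => t; rewrite !inE.
    by case: (t == b); case: (t == a); case: (0 < p t); case: (t \in VS).
  case htV: (t \in VS); rewrite ?andbF ?andbT //=.
  case: (eqVneq t a) => [e|]; first by rewrite e haV in htV.
  case: (eqVneq t b) => [e|] //=; first by rewrite e hbV in htV.
have hE := edges_le.
apply: ext_le_trans (ext_add_le (ext_add_le hda' hdb') (ext_le_refl _)) _.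
rewrite /= /pc_cost hsplit.
lra.
Qed.

End Main.

Unset Implicit Arguments.
Set Strict Implicit.

Theorem proposition2 (V : finType) (E : {set {set V}}) (c : {set V} -> rat)
    (p : V -> rat) (H : V -> {set V}) (vi : V) (VS : {set V}) (ES : {set {set V}})
    (ts vs : seq V) :
  pcstp_instance E c p ->
  (2 <= #|Tp p|)%N ->
  terminal_regions E p H ->
  perm_eq ts (enum (Tp p)) ->
  sorted (fun a b => rpc E c p H a <= rpc E c p H b) ts ->
  vi \notin Tp p ->
  perm_eq vs (enum (Tp p)) ->
  sorted (fun a b => ext_le (dbar E c p vi a) (dbar E c p vi b)) vs ->
  optimal E c p VS ES ->
  vi \in VS ->
  ext_le
    (ext_add (ext_add (dbar E c p vi (nth vi vs 0)) (dbar E c p vi (nth vi vs 1)))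
             (Some (\sum_(k < #|Tp p| - 2) rpc E c p H (nth vi ts k))))
    (Some (pc_cost c p VS ES)).
Proof.
move=> [hE2 hconn hc hp] hs hH hpts hsts hvT hpvs hsvs [hT hopt] hvi.
have ht0 : exists t, t \in Tp p.
  have /card_gt0P [t ht] : (0 < #|Tp p|)%N by move: hs; clear; lia.
  by exists t.
have [a [b [ha hb hab hbound]]] := main_bound hT hvi hc hp hvT hopt hH ht0.
apply: ext_le_trans hbound.
apply: ext_add_le.
  by apply: sorted_two hsvs _ _ hab; rewrite (perm_mem hpvs) mem_enum.
rewrite /=; exact: sorted_sum hpts hsts ha hb hab.
Qed.
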